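(* Let $Y$ be a metric space and $X$ a non-empty subset. If for every pair of points $x,y\in Y$ there exists a point $z\in C(x,y)\cap X$ (cone taken in $Y$), then the restriction map $f\mapsto f|_X$ is an isometry from $\mathrm{E}(Y)$ onto $\mathrm{E}(X)$.
   Context: $I(x,y)=\{v\in Y: d(x,v)+d(v,y)=d(x,y)\}$ and $C(x,v)=\{y\in Y: v\in I(x,y)\}$. For a metric space $Z$, $\Delta(Z)=\{f\colon Z\to\mathbb R: f(x)+f(y)\ge d(x,y)\ \forall x,y\}$ with the pointwise order; $\mathrm E(Z)$ is its set of minimal elements, with metric $\|f-g\|_\infty=\sup|f-g|$. *)

(* Defs.v *)
From mathcomp Require Import all_boot all_order all_algebra.
From mathcomp Require Import all_classical all_reals.
From mathcomp Require Import ereal.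
Set Implicit Arguments. Unset Strict Implicit. Unset Printing Implicit Defensive.
Import Order.TTheory GRing.Theory Num.Theory.
Local Open Scope ring_scope.
Local Open Scope classical_set_scope.

Definition is_metric (R : realType) (T : Type) (d : T -> T -> R) : Prop :=
  (forall x y, 0 <= d x y) /\
  (forall x y, d x y = 0 <-> x = y) /\
  (forall x y, d x y = d y x) /\
  (forall x y z, d x z <= d x y + d y z).

Definition Ival (R : realType) (T : Type) (d : T -> T -> R) (x y : T) : set T :=
  [set v | d x v + d v y = d x y].

Definition Cone (R : realType) (T : Type) (d : T -> T -> R) (x v : T) : set T :=
  [set y | Ival d x y v].

Definition Delta (R : realType) (T : Type) (d : T -> T -> R) : set (T -> R) :=
  [set f | forall x y, d x y <= f x + f y].

Definition Emin (R : realType) (T : Type) (d : T -> T -> R) : set (T -> R) :=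
  [set f | Delta d f /\ forall g, Delta d g -> (forall x, g x <= f x) -> g = f].

Definition supdist (R : realType) (T : Type) (f g : T -> R) : \bar R :=
  ereal_sup [set (`|f z - g z|)%:E | z in [set: T]].

Definition subdist (R : realType) (T : Type) (d : T -> T -> R) (X : set T)
  (a b : {x : T | X x}) : R := d (proj1_sig a) (proj1_sig b).

Definition restr (R : realType) (T : Type) (X : set T) (f : T -> R)
  : {x : T | X x} -> R := fun a => f (proj1_sig a).

(* Main.v *)
Require Import Defs.
From mathcomp Require Import all_boot all_order all_algebra.
From mathcomp Require Import all_classical all_reals.
From mathcomp Require Import ereal.
From mathcomp Require Import lra.
Import Order.TTheory GRing.Theory Num.Theory.
Local Open Scope ring_scope.
Local Open Scope classical_set_scope.

Section Aux.
Variables (R : realType).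

Lemma le_eps (a b : R) : (forall e : R, 0 < e -> a < b + e) -> a <= b.
Proof.
move=> H; rewrite leNgt; apply/negP => ba.
have := H (a - b); rewrite subr_gt0 => /(_ ba); lra.
Qed.

Variables (T : Type) (d : T -> T -> R).

Definition tight (f : T -> R) :=
  forall x (e : R), 0 < e -> exists y, f x + f y < d x y + e.

Lemma Emin_tight f : (forall x y, d x y = d y x) -> Emin d f -> tight f.
Proof.
move=> dC [Df Mf] x e e0; apply: contrapT => H.
have H' : forall y, d x y + e <= f x + f y.
  move=> y; rewrite leNgt; apply/negP => Hy; apply: H; exists y; lra.
pose g := fun z => if pselect (z = x) is left _ then f x - e / 2 else f z.
have Dg : Delta d g.
  move=> a b; rewrite /g.
  case: (pselect (a = x)) => [->|ax]; case: (pselect (b = x)) => [->|bx].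
  - have := H' x; lra.
  - have := H' b; have := Df x b; lra.
  - have := H' a; rewrite dC; lra.
  - exact: Df.
have Hgf : forall z, g z <= f z.
  move=> z; rewrite /g; case: (pselect (z = x)) => [->|_]; lra.
have := Mf g Dg Hgf => /(congr1 (fun h => h x)); rewrite /g.
case: (pselect (x = x)) => // _; lra.
Qed.

Lemma tight_Emin f : Delta d f -> tight f -> Emin d f.
Proof.
move=> Df Tf; split => // g Dg gf; apply/funext => x.
apply/le_anti; rewrite gf /=; apply: le_eps => e e0.
have [y Hy] := Tf x e e0; have := Dg x y; have := gf y; lra.
Qed.

Lemma tight_lip f : (forall x y z, d x z <= d x y + d y z) ->
  Delta d f -> tight f -> forall x y, f x <= f y + d x y.
Proof.
move=> tri Df Tf x y; apply: le_eps => e e0.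
have [w Hw] := Tf x e e0; have := tri x y w; have := Df y w; lra.
Qed.
End Aux.

Theorem proposition5p4 (R : realType) (T : Type) (d : T -> T -> R) (X : set T) :
  is_metric d ->
  (exists x, X x) ->
  (forall x y : T, exists z, Cone d x y z /\ X z) ->
  (forall f, Emin d f -> Emin (@subdist R T d X) (@restr R T X f)) /\
  (forall f g, Emin d f -> Emin d g ->
     supdist (@restr R T X f) (@restr R T X g) = supdist f g) /\
  (forall h, Emin (@subdist R T d X) h -> exists f, Emin d f /\ @restr R T X f = h).
Proof.
move=> [d0 [dx [dC tri]]] [x0 Xx0] cone.
have dxx : forall x, d x x = 0 by move=> x; apply/dx.
have lip : forall f, Emin d f -> forall x y, f x <= f y + d x y.
  move=> f Ef; apply: tight_lip => //; [exact: Ef.1 | exact: Emin_tight].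
split.
  move=> f Ef; apply: tight_Emin.
    by move=> a b; rewrite /subdist /restr; apply: Ef.1.
  move=> [x Xx] e e0; have [y Hy] := @Emin_tight R T d f dC Ef x e e0.
  have [z [Cz Xz]] := cone x y; move: Cz; rewrite /Cone /Ival /= => Cz.
  exists (exist _ z Xz); rewrite /subdist /restr /=.
  have := lip f Ef z y; rewrite (dC z y); lra.
split.
  have key : forall f g, Emin d f -> Emin d g -> forall y (e : R), 0 < e ->
      exists z, X z /\ f y - g y < f z - g z + e.
    move=> f g Ef Eg y e e0; have [w Hw] := @Emin_tight R T d f dC Ef y e e0.
    have [z [Cz Xz]] := cone w y; move: Cz; rewrite /Cone /Ival /= => Cz.
    exists z; split => //.
    have := Ef.1 z w; have := lip g Eg z y; rewrite (dC z y) (dC z w); have := dC w y.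
    lra.
  move=> f g Ef Eg; apply/eqP; rewrite eq_le; apply/andP; split.
    apply: ge_ereal_sup => _ [a _ <-]; apply: ereal_sup_ubound.
    by exists (proj1_sig a).
  apply: ge_ereal_sup => _ [y _ <-]; apply/lee_addgt0Pr => e e0.
  have [z [Xz Hz]] : exists z, X z /\ `|f y - g y| <= `|f z - g z| + e.
    case: (lerP 0 (f y - g y)) => H.
      have [z [Xz Hz]] := key f g Ef Eg y e e0; exists z; split => //.
      rewrite ger0_norm //; have := ler_norm (f z - g z); lra.
    have [z [Xz Hz]] := key g f Eg Ef y e e0; exists z; split => //.
    rewrite ltr0_norm //; have := ler_norm (g z - f z); rewrite distrC; lra.
  apply: (@le_trans _ _ ((`|f z - g z| + e)%:E)); first by rewrite lee_fin.
  rewrite EFinD; apply: leeD => //; apply: ereal_sup_ubound.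
  by exists (exist _ z Xz).
move=> h Eh.
have dsC : forall a b : {x : T | X x}, @subdist R T d X a b = @subdist R T d X b a.
  by move=> a b; exact: dC.
have Th := @Emin_tight R _ _ h dsC Eh; have Dh := Eh.1.
pose E y := [set d y (proj1_sig x) - h x | x in [set: {x : T | X x}]].
have hs : forall y, has_sup (E y).
  move=> y; split; first by exists (d y x0 - h (exist _ x0 Xx0)), (exist _ x0 Xx0).
  exists (d y x0 + h (exist _ x0 Xx0)) => _ [x _ <-].
  have := tri y x0 (proj1_sig x); have := Dh (exist _ x0 Xx0) x.
  rewrite /subdist /=; lra.
pose f y := sup (E y).
have A : forall y x, d y (proj1_sig x) - h x <= f y.
  by move=> y x; apply: sup_upper_bound (hs y) _ _; exists x.
have B : forall y (e : R), 0 < e -> exists x, f y - e < d y (proj1_sig x) - h x.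
  move=> y e e0; have [_ [x _ <-] Hx] := sup_adherent e0 (hs y); by exists x.
have C : forall x, f (proj1_sig x) <= h x.
  move=> x; apply: le_eps => e e0; have [x' Hx'] := B (proj1_sig x) e e0.
  have := Dh x x'; rewrite /subdist; lra.
have D : forall y z, h z <= f y + d y (proj1_sig z).
  move=> y z; apply: le_eps => e e0; have [x Hx] := Th z e e0.
  have := A y x; have := tri (proj1_sig z) y (proj1_sig x).
  move: Hx; rewrite /subdist (dC (proj1_sig z) y); lra.
clearbody f; exists f; split.
  apply: tight_Emin.
    move=> y y'; have [z [Cz Xz]] := cone y' y.
    move: Cz; rewrite /Cone /Ival /= => Cz.
    have := A y' (exist _ z Xz); have := D y (exist _ z Xz).
    have := dC y' y; simpl => H1 H2 H3; clear -H1 H2 H3 Cz; lra.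
  move=> y e e0; have [x Hx] := B y e e0; exists (proj1_sig x).
  have := C x; lra.
apply/funext => a; rewrite /restr; apply/le_anti; rewrite C /=.
by have := D (proj1_sig a) a; rewrite dxx addr0.
Qed.
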